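(* Let $\Phi\colon\mathrm{Cl}_{r,s+1}\to\mathrm{Cl}_{s,r+1}$ be the algebra isomorphism determined on orthonormal generators by $\Phi(z_i)=b_ib_{r+1}$ ($i=1,\ldots,r$), $\Phi(\zeta_j)=a_jb_{r+1}$ ($j=1,\ldots,s$), $\Phi(\zeta_{s+1})=b_{r+1}$, where $z_1,\ldots,z_r,\zeta_1,\ldots,\zeta_{s+1}$ are orthonormal generators of $\mathrm{Cl}_{r,s+1}$ ($\langle z_i,z_i\rangle=1$, $\langle\zeta_j,\zeta_j\rangle=-1$) and $a_1,\ldots,a_s,b_1,\ldots,b_{r+1}$ orthonormal generators of $\mathrm{Cl}_{s,r+1}$ ($\langle a_i,a_i\rangle=1$, $\langle b_j,b_j\rangle=-1$). Let $(V,\langle\cdot\,,\cdot\rangle_V)$ be an admissible $\mathrm{Cl}_{s,r+1}$-module with representation $J$ and let $\{v_\alpha\}$ be an integral basis of it such that each $J_{a_i}$ and each $J_{b_j}$ permutes $\{v_\alpha\}$ up to sign. Then $\{v_\alpha\}$ is also an integral basis of the admissible $\mathrm{Cl}_{r,s+1}$-module $(V,\langle\cdot\,,\cdot\rangle_V)$ with representation $J\circ\Phi$.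
   Context: A scalar product is a real symmetric non-degenerate bilinear form. $\mathrm{Cl}_{p,q}$ is the Clifford algebra generated by $\mathbb R^{p,q}$ ($\mathbb R^{p+q}$ with quadratic form $x_1^2+\dots+x_p^2-x_{p+1}^2-\dots-x_{p+q}^2$) with relation $z^2=-\langle z,z\rangle\cdot1$. A $\mathrm{Cl}_{p,q}$-module $V$ with representation $J$ is admissible if it carries a scalar product with $\langle J_zu,v\rangle_V=-\langle u,J_zv\rangle_V$ for all $z,u,v$. An integral basis of an admissible module is a basis $\{v_\alpha\}$ with $\langle v_\alpha,v_\beta\rangle_V=0$ for $\alpha\neq\beta$, $\langle v_\alpha,v_\alpha\rangle_V=\pm1$, and $\langle J_{x}v_\alpha,v_\beta\rangle_V\in\{1,-1,0\}$ for every orthonormal generator $x$ and all $\alpha,\beta$. An operator permutes $\{v_\alpha\}$ up to sign if it maps each $v_\alpha$ to $\pm v_\beta$ for some $\beta$. *)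

(* Defs.v *)
From HB Require Import structures.
From mathcomp Require Import all_boot all_order all_algebra.
Set Implicit Arguments. Unset Strict Implicit. Unset Printing Implicit Defensive.
Import Order.TTheory GRing.Theory Num.Theory.
Local Open Scope ring_scope.

(* A scalar product
   on V is given by its Gram matrix S (symmetric, invertible = non-degenerate).
   The orthonormal generators of Cl_{p,q} are indexed by 'I_(p+q): the first p
   have <x,x> = 1, the last q have <x,x> = -1.  A representation J of Cl_{p,q}
   on V is determined by the matrices J x of the generators x, which must
   satisfy the Clifford relations  J x J y + J y J x = -2 <x,y> Id. *)

Section Clifford.
Variable R : realFieldType.

Definition sig (p q : nat) (i : 'I_(p + q)) : R := if (i < p)%N then 1 else -1.

Definition gen_ip (p q : nat) (i j : 'I_(p + q)) : R :=
  if i == j then sig i else 0.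

Definition is_clrep (p q n : nat) (J : 'I_(p + q) -> 'M[R]_n) : Prop :=
  forall i j : 'I_(p + q), J i *m J j + J j *m J i = (- (2%:R * gen_ip i j))%:M.

Definition scalar_product (n : nat) (S : 'M[R]_n) : Prop :=
  S^T = S /\ S \in unitmx.

Definition form (n : nat) (S : 'M[R]_n) (u v : 'cV[R]_n) : R :=
  (u^T *m S *m v) 0 0.

Definition Jvec (p q n : nat) (J : 'I_(p + q) -> 'M[R]_n) (z : 'rV[R]_(p + q))
  : 'M[R]_n := \sum_(i < p + q) z 0 i *: J i.

Definition admissible (p q n : nat) (S : 'M[R]_n) (J : 'I_(p + q) -> 'M[R]_n)
  : Prop :=
  scalar_product S /\ is_clrep J /\
  forall (z : 'rV[R]_(p + q)) (u v : 'cV[R]_n),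
    form S (Jvec J z *m u) v = - form S u (Jvec J z *m v).

Definition integral_basis (p q n : nat) (S : 'M[R]_n)
  (J : 'I_(p + q) -> 'M[R]_n) (B : 'M[R]_n) : Prop :=
  [/\ B \in unitmx,
      (forall a b : 'I_n, a != b -> form S (col a B) (col b B) = 0),
      (forall a : 'I_n, form S (col a B) (col a B) = 1 \/
                        form S (col a B) (col a B) = -1) &
      (forall (x : 'I_(p + q)) (a b : 'I_n),
         form S (J x *m col a B) (col b B) = 1 \/
         form S (J x *m col a B) (col b B) = -1 \/
         form S (J x *m col a B) (col b B) = 0)].

Definition permutes_up_to_sign (n : nat) (A B : 'M[R]_n) : Prop :=
  forall a : 'I_n, exists (b : 'I_n) (e : R),
    (e = 1 \/ e = -1) /\ A *m col a B = e *: col b B.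

(* Generators of Cl_{s,r+1}, indexed by 'I_(s + r.+1):
   a_j = lshift r.+1 j (j < s),  b_j = rshift s j (j < r+1);
   b_{r+1} is rshift s ord_max. *)
Definition gen_a (s r : nat) (j : 'I_s) : 'I_(s + r.+1) := lshift r.+1 j.
Definition gen_b (s r : nat) (j : 'I_r.+1) : 'I_(s + r.+1) := rshift s j.

(* J o Phi on the generators of Cl_{r,s+1} (indexed by 'I_(r + s.+1):
   z_i = lshift s.+1 i (i < r), zeta_j = rshift r j (j < s+1)):
     Phi z_i = b_i b_{r+1},  Phi zeta_j = a_j b_{r+1} (j <= s),
     Phi zeta_{s+1} = b_{r+1}. *)
Definition JPhi (r s n : nat) (J : 'I_(s + r.+1) -> 'M[R]_n)
  (k : 'I_(r + s.+1)) : 'M[R]_n :=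
  let bl := J (gen_b s (@ord_max r)) in
  match split k with
  | inl i => J (gen_b s (widen_ord (leqnSn r) i)) *m bl
  | inr j => match unlift ord_max j with
             | Some j' => J (gen_a r j') *m bl
             | None => bl
             end
  end.

End Clifford.

Arguments JPhi {R} r s {n} J k.

(* Main.v *)
Require Import Defs.
From HB Require Import structures.
From mathcomp Require Import all_boot all_order all_algebra zify ring lra.
Import Order.TTheory GRing.Theory Num.Theory.
Local Open Scope ring_scope.

Section H.
Variable R : realFieldType.
Variable n : nat.
Implicit Types (S : 'M[R]_n) (u v : 'cV[R]_n).

Lemma trZ c u : (c *: u)^T = c *: u^T.
Proof. by apply/matrixP => i j; rewrite !mxE. Qed.
Lemma formZl S c u v : Defs.form S (c *: u) v = c * Defs.form S u v.
Proof. by rewrite /Defs.form trZ -!scalemxAl mxE. Qed.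
Lemma formZr S c u v : Defs.form S u (c *: v) = c * Defs.form S u v.
Proof. by rewrite /Defs.form -!scalemxAr mxE. Qed.
Lemma formNr S u v : Defs.form S u (- v) = - Defs.form S u v.
Proof. by rewrite /Defs.form mulmxN mxE. Qed.
Lemma form_suml S (I : finType) (c : I -> R) (w : I -> 'cV[R]_n) v :
  Defs.form S (\sum_i c i *: w i) v = \sum_i c i * Defs.form S (w i) v.
Proof.
rewrite /Defs.form raddf_sum !mulmx_suml summxE; apply: eq_bigr => i _ /=.
by rewrite trZ -!scalemxAl mxE.
Qed.
Lemma form_sumr S (I : finType) (c : I -> R) (w : I -> 'cV[R]_n) u :
  Defs.form S u (\sum_i c i *: w i) = \sum_i c i * Defs.form S u (w i).
Proof.
rewrite /Defs.form mulmx_sumr summxE; apply: eq_bigr => i _.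
by rewrite -!scalemxAr mxE.
Qed.
Lemma halve (A : 'M[R]_n) (c : R) : A + A = c%:M -> A = (c / 2)%:M.
Proof.
move=> H.
have -> : A = 2^-1 *: (A *+ 2).
  by rewrite -scaler_nat scalerA mulVf ?scale1r // pnatr_eq0.
by rewrite [A *+ 2]mulr2n H scale_scalar_mx mulrC.
Qed.
End H.

Definition gmap (r s : nat) (k : 'I_(r + s.+1)) : option 'I_(s + r.+1) :=
  match split k with
  | inl i => Some (gen_b s (widen_ord (leqnSn r) i))
  | inr j => match unlift ord_max j with
             | Some j' => Some (gen_a r j')
             | None => None
             end
  end.

Arguments gmap {r s} k.

Lemma JPhiE (R : realFieldType) r s n (J : 'I_(s + r.+1) -> 'M[R]_n) k :
  JPhi r s J k = match gmap k with
                 | Some y => J y *m J (gen_b s (@ord_max r))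
                 | None => J (gen_b s (@ord_max r)) end.
Proof. rewrite /JPhi /gmap; case: (split k) => // j; by case: (unlift _ _). Qed.

Lemma gmap_spec r s (k : 'I_(r + s.+1)) :
  match gmap k with
  | Some y => ((k < r)%N /\ val y = (s + k)%N) \/
              ((r <= k)%N /\ (k < r + s)%N /\ val y = (k - r)%N)
  | None => val k = (r + s)%N
  end.
Proof.
rewrite /gmap; case: splitP => [i Hi | j Hj].
  by left; rewrite /= Hi; have := ltn_ord i; lia.
case: unliftP => [j' Hj'|Hj'] /=.
  have E : nat_of_ord j = nat_of_ord j' by rewrite Hj' /= /bump leqNgt ltn_ord.
  have Hs := ltn_ord j'. right; simpl in *; lia.
move: Hj; rewrite Hj' /=. lia.
Qed.

Arguments gmap_spec {r s} k.

Lemma gmap_inj r s (k l : 'I_(r + s.+1)) : gmap k = gmap l -> k = l.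
Proof.
move=> E; apply: val_inj; have := gmap_spec k; have := gmap_spec l.
rewrite E; case: (gmap l) => [y|]; simpl in *; lia.
Qed.

Lemma gmap_neq r s (k : 'I_(r + s.+1)) y :
  gmap k = Some y -> y != gen_b s (@ord_max r).
Proof.
move=> E; have := gmap_spec k; rewrite E => H.
apply/eqP => Ey; move: H; rewrite Ey /=; have := ltn_ord k; lia.
Qed.

Lemma gmap_sig (R : realFieldType) r s (k : 'I_(r + s.+1)) y :
  gmap k = Some y -> sig R y = - sig R k.
Proof.
move=> E; have := gmap_spec k; rewrite E /sig => H.
case: ifP => A; case: ifP => B; rewrite ?opprK //; exfalso; simpl in *; lia.
Qed.

Lemma gmap_none (R : realFieldType) r s (k : 'I_(r + s.+1)) :
  gmap k = None -> sig R k = -1.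
Proof.
move=> E; have := gmap_spec k; rewrite E /sig => H.
case: ifP => A //; exfalso; simpl in *; lia.
Qed.

Arguments gmap_neq {r s k y}.
Arguments gmap_inj {r s k l}.
Arguments gmap_sig {R r s k y}.
Arguments gmap_none {R r s k}.

Lemma halve2 (R : realFieldType) n (A : 'M[R]_n) (x : R) :
  A + A = (- (2%:R * x))%:M -> A = (- x)%:M.
Proof.
move=> /halve ->; congr (_%:M).
by rewrite mulNr mulrAC mulfV ?mul1r // pnatr_eq0.
Qed.

Lemma scalarN (R : realFieldType) n (a : R) : - (a%:M : 'M[R]_n) = (- a)%:M.
Proof. by apply/matrixP => i j; rewrite !mxE mulNrn. Qed.

Lemma scalarD (R : realFieldType) n (a b : R) :
  (a%:M : 'M[R]_n) + b%:M = (a + b)%:M.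
Proof. by apply/matrixP => i j; rewrite !mxE mulrnDl. Qed.

Lemma scalar0 (R : realFieldType) n : ((0 : R)%:M : 'M[R]_n) = 0.
Proof. by apply/matrixP => i j; rewrite !mxE mul0rn. Qed.

Theorem corollary3p2 (R : realFieldType) (r s n : nat)
  (S : 'M[R]_n) (J : 'I_(s + r.+1) -> 'M[R]_n) (B : 'M[R]_n) :
  admissible S J ->
  integral_basis S J B ->
  (forall x : 'I_(s + r.+1), permutes_up_to_sign (J x) B) ->
  admissible S (JPhi r s J) /\ integral_basis S (JPhi r s J) B.
Proof.
move=> [SP [CL SK]] [BU BO BN BJ] Hperm.
set P := J (gen_b s (@ord_max r)).
have Jd x : Jvec J (delta_mx 0 x) = J x.
  rewrite /Jvec (bigD1 x) //= big1 ?addr0 => [|j jx].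
    by rewrite mxE !eqxx scale1r.
  by rewrite mxE (negbTE jx) andbF scale0r.
have skJ x u v : Defs.form S (J x *m u) v = - Defs.form S u (J x *m v).
  by rewrite -Jd SK.
have anti x y : x != y -> J x *m J y = - (J y *m J x).
  move=> xy; apply/eqP; rewrite -addr_eq0 CL /gen_ip (negbTE xy).
  by rewrite mulr0 oppr0 scalar0.
have sq x : J x *m J x = (- sig R x)%:M.
  by apply: halve2; rewrite CL /gen_ip eqxx.
have PP : P *m P = 1%:M.
  by rewrite /P sq /sig /= ltnNge leq_addr /= opprK.
have skPhi k u v :
    Defs.form S (JPhi r s J k *m u) v = - Defs.form S u (JPhi r s J k *m v).
  rewrite JPhiE; case E: (gmap k) => [y|]; last exact: skJ.
  have ny := gmap_neq E.
  have nyP : gen_b s (@ord_max r) != y by rewrite eq_sym.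
  rewrite -!mulmxA skJ skJ opprK (mulmxA P) (anti _ _ nyP).
  by rewrite mulNmx -mulmxA formNr.
have key Y Y' : Y != gen_b s (@ord_max r) -> Y' != gen_b s (@ord_max r) ->
    (J Y *m P) *m (J Y' *m P) = - (J Y *m J Y').
  move=> nY nY'; have nYP : gen_b s (@ord_max r) != Y' by rewrite eq_sym.
  rewrite -mulmxA (mulmxA P) (anti _ _ nYP) mulNmx -mulmxA PP mulmx1.
  by rewrite mulmxN.
split; last first.
  split=> // x a b; rewrite JPhiE; case E: (gmap x) => [y|]; last exact: BJ.
  rewrite -mulmxA.
  have [c [e [He Hc]]] := Hperm (gen_b s (@ord_max r)) a.
  rewrite /P Hc -scalemxAr.
  have [d [e' [He' Hd]]] := Hperm y c.
  rewrite Hd !formZl.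
  have Hf : Defs.form S (col d B) (col b B) = 1 \/
            Defs.form S (col d B) (col b B) = -1 \/
            Defs.form S (col d B) (col b B) = 0.
    case: (eqVneq d b) => [->|db]; last by rewrite BO //; right; right.
    by case: (BN b) => ->; [left|right; left].
  move: He He' Hf => [->|->] [->|->] [->|[->|->]];
    rewrite ?mul1r ?mulN1r ?opprK ?oppr0 ?mulr0;
    by [left | right; left | right; right].
split=> //; split.
  move=> k l; rewrite !JPhiE.
  case Ek: (gmap k) => [y|]; case El: (gmap l) => [y'|].
  - rewrite !key ?(gmap_neq Ek) ?(gmap_neq El) // -opprD CL scalarN.
    have G : gen_ip R y y' = - gen_ip R k l.
      rewrite /gen_ip; case: (eqVneq k l) => [kl|kl].
        move: El; rewrite -kl Ek => -[<-]; rewrite !eqxx (gmap_sig Ek) //.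
      have yy : y != y'.
        apply/eqP => yy; move: kl; rewrite (gmap_inj (etrans Ek (esym (etrans El (congr1 Some (esym yy)))))).
        by rewrite eqxx.
      by rewrite (negbTE yy) oppr0.
    by rewrite G; congr (_%:M); rewrite mulrN opprK.
  - have kl : k != l by apply/eqP => kl; move: Ek; rewrite kl El.
    rewrite /gen_ip (negbTE kl) mulr0 oppr0 scalar0.
    have nyP : gen_b s (@ord_max r) != y by rewrite eq_sym (gmap_neq Ek).
    rewrite -mulmxA PP mulmx1 mulmxA (anti _ _ nyP) mulNmx -mulmxA PP mulmx1.
    by rewrite addrN.
  - have kl : k != l by apply/eqP => kl; move: Ek; rewrite kl El.
    rewrite /gen_ip (negbTE kl) mulr0 oppr0 scalar0.
    have nyP : gen_b s (@ord_max r) != y' by rewrite eq_sym (gmap_neq El).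
    rewrite -mulmxA PP mulmx1 mulmxA (anti _ _ nyP) mulNmx -mulmxA PP mulmx1.
    by rewrite addNr.
  - have kl : k = l by apply: gmap_inj; rewrite Ek El.
    rewrite -kl /gen_ip eqxx (gmap_none Ek) PP scalarD; congr (_%:M).
    by rewrite mulrN1 opprK.
move=> z u v; rewrite /Jvec !mulmx_suml.
under eq_bigr do rewrite -scalemxAl.
under [X in _ = - Defs.form _ _ X]eq_bigr do rewrite -scalemxAl.
rewrite form_suml form_sumr -sumrN; apply: eq_bigr => i _.
by rewrite skPhi mulrN.
Qed.
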